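(* Let $\mathfrak{b}_6$ be a butterfly algebra. Then there is a vector space decomposition $\mathfrak{b}_6=\mathfrak{v}\oplus[\mathfrak{b}_6,\mathfrak{b}_6]$ in which the subspaces $\mathfrak{v}$ and $[\mathfrak{b}_6,\mathfrak{b}_6]$ are totally isotropic and dual to each other with respect to $(\cdot,\cdot)$. In particular, $(\cdot,\cdot)$ is non-degenerate of signature $(3,3)$.
   Context: A butterfly algebra is a real 2-step nilpotent Lie algebra $\mathfrak{b}_6$ (i.e. $[\mathfrak{b}_6,[\mathfrak{b}_6,\mathfrak{b}_6]]=0$) of dimension $6$, endowed with a symmetric bilinear form $(\cdot,\cdot)$ that is invariant, i.e. $([X,Y],Z)=-(Y,[X,Z])$ for all $X,Y,Z$, such that there exists $Z\in[\mathfrak{b}_6,\mathfrak{b}_6]$ not lying in the radical $\mathfrak{r}=\{X\in\mathfrak{b}_6\mid (X,\mathfrak{b}_6)=0\}$. *)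

(* Defs.v *)
From HB Require Import structures.
From mathcomp Require Import all_boot all_order all_algebra.
From mathcomp Require Import reals.
Set Implicit Arguments. Unset Strict Implicit. Unset Printing Implicit Defensive.
Import Order.TTheory GRing.Theory Num.Theory.
Local Open Scope ring_scope.

Notation V6 R := 'rV[R]_6.

Definition is_lie_bracket (R : realType) (br : V6 R -> V6 R -> V6 R) : Prop :=
  [/\ (forall (a : R) x y z, br (a *: x + y) z = a *: br x z + br y z),
      (forall (a : R) x y z, br x (a *: y + z) = a *: br x y + br x z),
      (forall x, br x x = 0) &
      (forall x y z, br x (br y z) + br y (br z x) + br z (br x y) = 0)].

Definition two_step_nilpotent (R : realType) (br : V6 R -> V6 R -> V6 R) : Prop :=
  forall x y z, br x (br y z) = 0.

Definition in_derived (R : realType) (br : V6 R -> V6 R -> V6 R) (z : V6 R) : Prop :=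
  exists (n : nat) (xs ys : 'I_n -> V6 R), z = \sum_(i < n) br (xs i) (ys i).

Definition bform (R : realType) (B : 'M[R]_6) (x y : V6 R) : R :=
  (x *m B *m y^T) 0 0.

Definition invariant_form (R : realType) (br : V6 R -> V6 R -> V6 R) (B : 'M[R]_6)
  : Prop := forall x y z, bform B (br x y) z = - bform B y (br x z).

Definition in_radical (R : realType) (B : 'M[R]_6) (x : V6 R) : Prop :=
  forall y, bform B x y = 0.

Definition butterfly (R : realType) (br : V6 R -> V6 R -> V6 R) (B : 'M[R]_6) : Prop :=
  [/\ is_lie_bracket br, two_step_nilpotent br, B^T = B, invariant_form br B &
      exists z, in_derived br z /\ ~ in_radical B z].

Definition signature (R : realType) (B : 'M[R]_6) (p q : nat) : Prop :=
  (p + q = 6)%N /\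
  exists P : 'M[R]_6, P \in unitmx /\
    P *m B *m P^T = diag_mx (\row_(i < 6) if (i < p)%N then 1 else -1).

(* Main.v *)
Require Import Defs.
From HB Require Import structures.
From mathcomp Require Import all_boot all_order all_algebra.
From mathcomp Require Import reals ring.
From Stdlib Require Import Classical.
Set Implicit Arguments. Unset Strict Implicit. Unset Printing Implicit Defensive.
Import Order.TTheory GRing.Theory Num.Theory.
Local Open Scope ring_scope.

Lemma trD (R : realType) m n (A C : 'M[R]_(m,n)) : (A + C)^T = A^T + C^T.
Proof. exact: linearD. Qed.
Lemma trZ (R : realType) m n (a : R) (A : 'M[R]_(m,n)) : (a *: A)^T = a *: A^T.
Proof. exact: linearZ. Qed.
Lemma trB (R : realType) m n (A C : 'M[R]_(m,n)) : (A - C)^T = A^T - C^T.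
Proof. exact: linearB. Qed.

Definition gram (R : realType) (B : 'M[R]_6) m p (A : 'M[R]_(m,6)) (C : 'M[R]_(p,6))
  : 'M[R]_(m,p) := A *m B *m C^T.

Lemma gramDl (R : realType) B m p (A1 A2 : 'M[R]_(m,6)) (C : 'M[R]_(p,6)) :
  gram B (A1 + A2) C = gram B A1 C + gram B A2 C.
Proof. by rewrite /gram !mulmxDl. Qed.
Lemma gramDr (R : realType) B m p (A : 'M[R]_(m,6)) (C1 C2 : 'M[R]_(p,6)) :
  gram B A (C1 + C2) = gram B A C1 + gram B A C2.
Proof. by rewrite /gram trD mulmxDr. Qed.
Lemma gramBl (R : realType) B m p (A1 A2 : 'M[R]_(m,6)) (C : 'M[R]_(p,6)) :
  gram B (A1 - A2) C = gram B A1 C - gram B A2 C.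
Proof. by rewrite /gram !mulmxBl. Qed.
Lemma gramBr (R : realType) B m p (A : 'M[R]_(m,6)) (C1 C2 : 'M[R]_(p,6)) :
  gram B A (C1 - C2) = gram B A C1 - gram B A C2.
Proof. by rewrite /gram trB mulmxBr. Qed.
Lemma gramZl (R : realType) B m p a (A : 'M[R]_(m,6)) (C : 'M[R]_(p,6)) :
  gram B (a *: A) C = a *: gram B A C.
Proof. by rewrite /gram -!scalemxAl. Qed.
Lemma gramZr (R : realType) B m p a (A : 'M[R]_(m,6)) (C : 'M[R]_(p,6)) :
  gram B A (a *: C) = a *: gram B A C.
Proof. by rewrite /gram trZ scalemxAr. Qed.
Lemma gramMl (R : realType) B m k p (K : 'M[R]_(k,m)) (A : 'M[R]_(m,6)) (C : 'M[R]_(p,6)) :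
  gram B (K *m A) C = K *m gram B A C.
Proof. by rewrite /gram !mulmxA. Qed.
Lemma gramMr (R : realType) B m k p (K : 'M[R]_(k,p)) (A : 'M[R]_(m,6)) (C : 'M[R]_(p,6)) :
  gram B A (K *m C) = gram B A C *m K^T.
Proof. by rewrite /gram trmx_mul !mulmxA. Qed.
Lemma gramT (R : realType) B m p (A : 'M[R]_(m,6)) (C : 'M[R]_(p,6)) :
  B^T = B -> (gram B A C)^T = gram B C A.
Proof. by move=> hB; rewrite /gram !trmx_mul trmxK hB mulmxA. Qed.

Lemma gram_entry (R : realType) B m p (A : 'M[R]_(m,6)) (C : 'M[R]_(p,6)) i j :
  gram B A C i j = bform B (row i A) (row j C).
Proof.
rewrite /gram /bform !mxE; apply: eq_bigr => k _; rewrite !mxE; congr (_ * _).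
by apply: eq_bigr => l _; rewrite !mxE.
Qed.

Lemma bform_gram (R : realType) B (x y : 'rV[R]_6) : bform B x y = gram B x y 0 0.
Proof. by []. Qed.

Lemma bformDl (R : realType) B (x1 x2 y : 'rV[R]_6) :
  bform B (x1 + x2) y = bform B x1 y + bform B x2 y.
Proof. by rewrite !bform_gram gramDl mxE. Qed.
Lemma bformZl (R : realType) B a (x y : 'rV[R]_6) :
  bform B (a *: x) y = a * bform B x y.
Proof. by rewrite !bform_gram gramZl mxE. Qed.
Lemma bformDr (R : realType) B (x y1 y2 : 'rV[R]_6) :
  bform B x (y1 + y2) = bform B x y1 + bform B x y2.
Proof. by rewrite !bform_gram gramDr mxE. Qed.
Lemma bformZr (R : realType) B a (x y : 'rV[R]_6) :
  bform B x (a *: y) = a * bform B x y.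
Proof. by rewrite !bform_gram gramZr mxE. Qed.
Lemma bform0l (R : realType) B (y : 'rV[R]_6) : bform B 0 y = 0.
Proof. by rewrite /bform !mul0mx mxE. Qed.
Lemma bform0r (R : realType) B (y : 'rV[R]_6) : bform B y 0 = 0.
Proof. by rewrite /bform trmx0 mulmx0 mxE. Qed.
Lemma bform_suml (R : realType) B n (xs : 'I_n -> 'rV[R]_6) y :
  bform B (\sum_i xs i) y = \sum_i bform B (xs i) y.
Proof. by rewrite /bform !mulmx_suml summxE. Qed.
Lemma bform_sumr (R : realType) B n (xs : 'I_n -> 'rV[R]_6) y :
  bform B y (\sum_i xs i) = \sum_i bform B y (xs i).
Proof.
elim/big_ind2: _ => //; first exact: bform0r.
by move=> a b c d <- <-; rewrite bformDr.
Qed.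
Lemma bform_sym (R : realType) B (x y : 'rV[R]_6) : B^T = B -> bform B x y = bform B y x.
Proof. by move=> hB; rewrite !bform_gram -gramT // mxE. Qed.
Lemma gramNl (R : realType) B m p (A : 'M[R]_(m,6)) (C : 'M[R]_(p,6)) :
  gram B (- A) C = - gram B A C.
Proof. by rewrite -scaleN1r gramZl scaleN1r. Qed.
Lemma gramNr (R : realType) B m p (A : 'M[R]_(m,6)) (C : 'M[R]_(p,6)) :
  gram B A (- C) = - gram B A C.
Proof. by rewrite -scaleN1r gramZr scaleN1r. Qed.
Lemma lie_facts (R : realType) (br : 'rV[R]_6 -> 'rV[R]_6 -> 'rV[R]_6) :
  is_lie_bracket br ->
  [/\ (forall x y, br (- x) y = - br x y),
      (forall a x y, br (a *: x) y = a *: br x y),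
      (forall x y, br y x = - br x y) &
      (forall x, br x x = 0)].
Proof.
case=> hl hr ha _.
have Dl x y z : br (x + y) z = br x z + br y z by have := hl 1 x y z; rewrite !scale1r.
have Dr x y z : br x (y + z) = br x y + br x z by have := hr 1 x y z; rewrite !scale1r.
have l0 z : br 0 z = 0.
  have := Dl 0 0 z; rewrite addr0 => /(congr1 (fun t => t - br 0 z)).
  by rewrite subrr addrK => H; exact: esym H.
have Zl a x y : br (a *: x) y = a *: br x y by rewrite -[a *: x]addr0 hl l0 addr0.
have anti x y : br y x = - br x y.
  have := ha (x + y); rewrite Dl !Dr !ha add0r addr0 => /eqP.
  by rewrite addr_eq0 => /eqP ->; rewrite opprK.
split=> // x y; by rewrite -scaleN1r Zl scaleN1r.
Qed.

Lemma phi_facts (R : realType) (br : 'rV[R]_6 -> 'rV[R]_6 -> 'rV[R]_6) (B : 'M[R]_6) :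
  is_lie_bracket br -> two_step_nilpotent br -> B^T = B -> invariant_form br B ->
  [/\ (forall x y z, bform B (br x y) z = - bform B (br x z) y),
      (forall x y, bform B (br x y) x = 0),
      (forall x y, bform B (br x y) y = 0),
      (forall a b c, bform B (br b c) a = bform B (br a b) c) &
      (forall a b c, bform B (br c a) b = bform B (br a b) c)] /\
      (forall x y u w, bform B (br x y) (br u w) = 0).
Proof.
move=> hL h2 hB hinv; have [Nl Zl anti aa] := lie_facts hL.
have bN x y : bform B (- x) y = - bform B x y by rewrite -scaleN1r bformZl mulN1r.
have p23 x y z : bform B (br x y) z = - bform B (br x z) y.
  by rewrite hinv (bform_sym _ _ hB).
have p12 x y z : bform B (br y x) z = - bform B (br x y) z by rewrite anti bN.
have pxyy x y : bform B (br x y) y = 0.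
  have := p23 x y y; move/eqP; rewrite -addr_eq0 -mulr2n mulrn_eq0 /=.
  by move/eqP.
split; first split=> //.
- by move=> x y; rewrite p23 aa bform0l oppr0.
- by move=> a b c; rewrite p23 p12 opprK.
- by move=> a b c; rewrite p12 p23 opprK.
- by move=> x y u w; rewrite hinv h2 bform0r oppr0.
Qed.
Definition sel3 (R : realType) (a b c : 'rV[R]_6) : 'M[R]_(3,6) :=
  \matrix_(i < 3) (if (i == 0 :> nat) then a else if (i == 1 :> nat) then b else c).

Lemma main_abc (R : realType) (br : 'rV[R]_6 -> 'rV[R]_6 -> 'rV[R]_6) (B : 'M[R]_6) a b c :
  is_lie_bracket br -> two_step_nilpotent br -> B^T = B -> invariant_form br B ->
  bform B (br a b) c != 0 ->
  (exists v : 'M[R]_6,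
     (forall x : 'rV[R]_6, exists a d, (a <= v)%MS /\ in_derived br d /\ x = a + d) /\
     (forall a : 'rV[R]_6, (a <= v)%MS -> in_derived br a -> a = 0) /\
     (forall x y : 'rV[R]_6, (x <= v)%MS -> (y <= v)%MS -> bform B x y = 0) /\
     (forall x y : 'rV[R]_6, in_derived br x -> in_derived br y -> bform B x y = 0) /\
     (forall x : 'rV[R]_6, (x <= v)%MS ->
        (forall z, in_derived br z -> bform B x z = 0) -> x = 0) /\
     (forall z : 'rV[R]_6, in_derived br z ->
        (forall x, (x <= v)%MS -> bform B x z = 0) -> z = 0)) /\
  (forall x : 'rV[R]_6, in_radical B x -> x = 0) /\
  signature B 3 3.
Proof.
move=> hL h2 hB hinv hlam.
have [Nl Zl anti aa] := lie_facts hL.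
have [[p23 pxyx pxyy cyc1 cyc2] iso] := phi_facts hL h2 hB hinv.
set lam := bform B (br a b) c.
set X := sel3 a b c.
set E := sel3 (br b c) (br c a) (br a b).
have K1 : gram B X E = lam%:M.
  apply/matrixP => i j; rewrite gram_entry !rowK !mxE bform_sym //.
  by case: i => [[|[|[|?]]] ?]; case: j => [[|[|[|?]]] ?] //=.
have K2 : gram B E E = 0.
  by apply/matrixP => i j; rewrite gram_entry !rowK !mxE;
   case: i => [[|[|[|?]]] ?]; case: j => [[|[|[|?]]] ?] //=.
have lam0 : lam != 0 by [].
set S := gram B X X.
have ST : S^T = S by rewrite /S gramT.
set k := (lam *+ 2)^-1.
have klam : k * lam = 2^-1.
  have l2 : lam *+ 2 = 2 * lam by rewrite mulr_natl.
  by rewrite /k l2 invfM -mulrA mulVf // mulr1.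
set F := X - k *: (S *m E).
have K3 : gram B F E = lam%:M.
  by rewrite /F gramBl gramZl gramMl K2 (mulmx0 _ S) scaler0 subr0.
have K4 : gram B E F = lam%:M.
  by rewrite -gramT // K3 tr_scalar_mx.
have K5 : gram B E X = lam%:M.
  by rewrite -gramT // K1 tr_scalar_mx.
have K6 : gram B F F = 0.
  rewrite /F !(gramBl, gramBr, gramZl, gramZr, gramMl, gramMr) K1 K2 K5 ST.
  rewrite mul_scalar_mx mul_mx_scalar (mul0mx _ S) scaler0 (mulmx0 _ S) scaler0 subr0 !scalerA klam.
  apply/matrixP => i j; rewrite !mxE -/S; by field.
clearbody F.
set U := F + k *: E.
set W := F - k *: E.
have KUU : gram B U U = 1%:M.
  rewrite /U !(gramDl, gramDr, gramNl, gramNr, gramZl, gramZr)  K3 K4 K6 K2 !scaler0 add0r addr0.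
  apply/matrixP => i0 j0; rewrite !mxE; case: eqP => _ /=; last by rewrite !mulr0n !mulr0 addr0.
  by rewrite !mulr1n /k; field.
have KWW : gram B W W = - 1%:M.
  rewrite /W !(gramBl, gramBr, gramZl, gramZr) K3 K4 K6 K2 !scaler0.
  by apply/matrixP => i0 j0; rewrite !mxE; case: eqP => _ /=; rewrite ?mulr1n ?mulr0n /k; field.
have KUW : gram B U W = 0.
  rewrite /U /W !(gramBl, gramBr, gramDl, gramDr, gramNl, gramNr, gramZl, gramZr) K3 K4 K6 K2 !scaler0.
  by apply/matrixP => i0 j0; rewrite !mxE; ring.
have KWU : gram B W U = 0.
  rewrite /U /W !(gramBl, gramBr, gramDl, gramDr, gramNl, gramNr, gramZl, gramZr) K3 K4 K6 K2 !scaler0.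
  by apply/matrixP => i0 j0; rewrite !mxE; ring.
pose P : 'M[R]_6 := col_mx U W.
pose D : 'M[R]_6 := block_mx (1%:M : 'M[R]_3) (0 : 'M[R]_3) (0 : 'M[R]_3) (- 1%:M : 'M[R]_3).
have KPP0 : (col_mx U W : 'M[R]_(3+3,6)) *m B *m (col_mx U W)^T
     = block_mx (1%:M : 'M[R]_3) 0 0 (- 1%:M).
  by rewrite tr_col_mx mul_col_mx mul_col_row -!/(gram B _ _) KUU KWW KUW KWU.
have KPP : P *m B *m P^T = D by exact: KPP0.
have DD0 : block_mx (1%:M : 'M[R]_3) (0 : 'M[R]_3) 0 (- 1%:M) *m block_mx (1%:M : 'M[R]_3) (0 : 'M[R]_3) 0 (- 1%:M)
   = 1%:M.
  rewrite mulmx_block !mulmx0 !mul0mx !mulmx1 !addr0 !add0r mulmxN mulmx1 opprK.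
  by rewrite -scalar_mx_block.
have DD : D *m D = 1%:M by exact: DD0.
have [Dunit _] := mulmx1_unit DD.
move: Dunit; rewrite -KPP !unitmx_mul => /andP[/andP[Punit Bunit] _].
have decomp : forall x : 'rV[R]_6, exists (al be : 'rV[R]_3), x = al *m F + be *m E.
  move=> x; pose k0 : 'rV[R]_(3+3) := x *m invmx P.
  have xk : x = k0 *m P by rewrite /k0 -mulmxA mulVmx // mulmx1.
  exists (lsubmx k0 + rsubmx k0), (k *: (lsubmx k0 - rsubmx k0)).
  have -> : x = lsubmx k0 *m U + rsubmx k0 *m W.
    by rewrite -mul_row_col hsubmxK.
  rewrite /U /W mulmxDr mulmxBr -!scalemxAr mulmxDl scalerBr mulmxBl -!scalemxAl.
  by rewrite addrACA.
have lamI : forall m n (al : 'M[R]_(m,n)), lam *: al = 0 -> al = 0.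
  by move=> m n al /eqP; rewrite scalemx_eq0 (negbTE lam0) /= => /eqP.
have Ederiv : forall be : 'rV[R]_3, in_derived br (be *m E).
  move=> be; exists 3, (fun i => be 0 i *: row i (sel3 b c a)), (fun i => row i (sel3 c a b)).
  rewrite mulmx_sum_row; apply: eq_bigr => i _; rewrite Zl !rowK.
  by case: i => [[|[|[|?]]] ?].
have diso : forall z, in_derived br z -> forall p q, bform B z (br p q) = 0.
  move=> z [n [xs [ys ->]]] p q; rewrite bform_suml big1 // => i _; exact: iso.
have diso2 : forall z z', in_derived br z -> in_derived br z' -> bform B z z' = 0.
  move=> z z' hz [n [xs [ys ->]]]; rewrite bform_sumr big1 // => i _; exact: diso.
have zE : forall z, in_derived br z -> gram B z E = 0.
  move=> z hz; apply/matrixP => i j; rewrite gram_entry row_id rowK !mxE.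
  by case: j => [[|[|[|?]]] ?] //=; rewrite diso.
have dchar : forall z, in_derived br z -> exists be, z = be *m E.
  move=> z hz; have [al [be ez]] := decomp z; exists be.
  have := zE z hz; rewrite ez gramDl !gramMl K3 K2 (mulmx0 _ be) addr0 mul_mx_scalar.
  by move/lamI ->; rewrite mul0mx add0r.
pose v : 'M[R]_6 := col_mx F (0 : 'M[R]_(3,6)).
have eqv0 : (col_mx F (0 : 'M[R]_(3,6)) :=: F)%MS.
  exact: eqmx_trans (eqmx_sym (addsmxE F (0 : 'M[R]_(3,6)))) (addsmx0 3 F).
have eqv : (v :=: F)%MS := eqv0.
have sv : forall x : 'rV[R]_6, (x <= v)%MS = (x <= F)%MS by move=> x; rewrite eqv.
have svP : forall x : 'rV[R]_6, (x <= v)%MS -> exists al, x = al *m F.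
  by move=> x; rewrite sv => /submxP.
have FE0 : forall al : 'rV[R]_3, gram B (al *m F) E = 0 -> al = 0.
  by move=> al; rewrite gramMl K3 mul_mx_scalar => /lamI.
have Dd0 : block_mx (1%:M : 'M[R]_3) (0 : 'M[R]_3) 0 (- 1%:M)
   = diag_mx (\row_(i < 3 + 3) if (i < 3)%N then 1 else -1).
  apply/matrixP => i j; rewrite -[i]splitK -[j]splitK.
  case: (split i) => i'; case: (split j) => j' /=.
  - by rewrite block_mxEul !mxE eq_lshift /= ltn_ord.
  - by rewrite block_mxEur !mxE eq_lrshift.
  - by rewrite block_mxEdl !mxE eq_rlshift.
  - by rewrite block_mxEdr !mxE eq_rshift /= mulNrn.
split.
  exists v; split.
    move=> x; have [al [be ->]] := decomp x; exists (al *m F), (be *m E).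
    by rewrite sv submxMl; split => //; split => //; apply: Ederiv.
  split.
    move=> x /svP [al ->] hd; have := FE0 al; rewrite zE // => /(_ erefl) ->.
    by rewrite mul0mx.
  split.
    move=> x y /svP [al ->] /svP [al' ->].
    by rewrite bform_gram gramMl gramMr K6 (mul0mx _ al'^T) (mulmx0 _ al) mxE.
  split; first exact: diso2.
  split.
    move=> x /svP [al ->] H.
    suff -> : al = 0 by rewrite mul0mx.
    apply: FE0; apply/matrixP => i j; rewrite gram_entry row_id mxE rowE.
    by apply: H; apply: Ederiv.
  move=> z hz H; have [be ez] := dchar z hz.
  have : gram B F z = 0.
    apply/matrixP => i j; rewrite gram_entry (row_id j z) mxE; apply: H.
    by rewrite sv row_sub.
  rewrite ez gramMr K3 mul_scalar_mx => /lamI hbe.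
  by rewrite -[be]trmxK hbe trmx0 mul0mx.
split.
  move=> x hx; have : gram B x 1%:M = 0.
    by apply/matrixP => i j; rewrite gram_entry row_id mxE; apply: hx.
  rewrite /gram trmx1 mulmx1 => hxB.
  by rewrite -[x]mulmx1 -(mulmxV Bunit) mulmxA hxB mul0mx.
split=> //; exists P; split => //; rewrite KPP; exact: Dd0.
Qed.
Theorem proposition5p3 (R : realType) (br : 'rV[R]_6 -> 'rV[R]_6 -> 'rV[R]_6)
    (B : 'M[R]_6) :
  butterfly br B ->
  (exists v : 'M[R]_6,
     (* b6 = v (+) [b6,b6] as vector spaces *)
     (forall x : 'rV[R]_6, exists a d, (a <= v)%MS /\ in_derived br d /\ x = a + d) /\
     (forall a : 'rV[R]_6, (a <= v)%MS -> in_derived br a -> a = 0) /\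
     (* both summands totally isotropic *)
     (forall x y : 'rV[R]_6, (x <= v)%MS -> (y <= v)%MS -> bform B x y = 0) /\
     (forall x y : 'rV[R]_6, in_derived br x -> in_derived br y -> bform B x y = 0) /\
     (* dual to each other: the pairing v x [b6,b6] -> R is non-degenerate *)
     (forall x : 'rV[R]_6, (x <= v)%MS ->
        (forall z, in_derived br z -> bform B x z = 0) -> x = 0) /\
     (forall z : 'rV[R]_6, in_derived br z ->
        (forall x, (x <= v)%MS -> bform B x z = 0) -> z = 0)) /\
  (* in particular: non-degenerate of signature (3,3) *)
  (forall x : 'rV[R]_6, in_radical B x -> x = 0) /\
  signature B 3 3.
Proof.
move=> [hL h2 hB hinv [z [[n [xs [ys ez]]] hnr]]].
case: (classic (exists i y, bform B (br (xs i) (ys i)) y != 0)) => [[i [y hi]]|hno].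
  exact: main_abc hL h2 hB hinv hi.
exfalso; apply: hnr => y; rewrite ez bform_suml big1 // => i _.
by apply/eqP/negPn/negP => hne; apply: hno; exists i, y.
Qed.
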